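(* Let $G$ be a finite group and $\xi$ a linear character of $G$. Then $$|\{\chi\in G^*\mid\chi=\bar\chi\otimes\xi\}|+\tfrac12|\{\chi\in G^*\mid\chi\neq\bar\chi\otimes\xi\}|=|G_{**}|-|\{C\mid C=C^{-1},\ \xi(C)=-1\}|,$$ where $C$ runs over conjugacy classes of $G$ and $\xi(C)$ is the value of $\xi$ on $C$.
   Context: $G^*$ is the set of irreducible complex characters of $G$; $\bar\chi\otimes\xi$ is the character $g\mapsto\overline{\chi(g)}\xi(g)$. For a conjugacy class $C$, $C^{-1}=\{c^{-1}\mid c\in C\}$. $G_{**}=\{C_g\cup C_{g^{-1}}\mid g\in G\}$, where $C_g$ is the conjugacy class of $g$. *)

(* Defs.v *)
From HB Require Import structures.
From mathcomp Require Import all_boot all_order all_algebra all_fingroup all_solvable all_field all_character.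
Set Implicit Arguments. Unset Strict Implicit. Unset Printing Implicit Defensive.
Import GRing.Theory Num.Theory.

Definition set_inv (gT : finGroupType) (C : {set gT}) : {set gT} :=
  [set (c^-1)%g | c in C].

Definition Gstarstar (gT : finGroupType) (G : {group gT}) : {set {set gT}} :=
  [set ((g ^: G) :|: ((g^-1)%g ^: G))%g | g in G].

(* Main.v *)
Require Import Defs.
From HB Require Import structures.
From mathcomp Require Import all_boot all_order all_algebra all_fingroup all_solvable all_field all_character.
From mathcomp Require Import ring.
Import GRing.Theory Num.Theory.
Local Open Scope ring_scope.
Lemma set_invE (gT : finGroupType) (C : {set gT}) : set_inv C = (C^-1)%g.
Proof.
apply/setP=> x; rewrite mem_invg; apply/imsetP/idP => [[c Cc ->]|Cx].
  by rewrite invgK.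
by exists x^-1%g; rewrite ?invgK.
Qed.

Lemma set_inv_class (gT : finGroupType) (G : {group gT}) x :
  set_inv (x ^: G)%g = (x^-1 ^: G)%g.
Proof. by rewrite set_invE classVg. Qed.

Lemma card_imset_sum (T T' : finType) (f : T -> T') (A : {set T}) :
  #|f @: A|%:R = \sum_(a in A) (#|[set b in A | f b == f a]|%:R)^-1 :> algC.
Proof.
rewrite (partition_big_imset f) /= -sum1_card natr_sum.
apply: eq_bigr => j /imsetP[a Aa ->].
rewrite (eq_bigr (fun _ => (#|[set b in A | f b == f a]|%:R)^-1)); last first.
  by move=> i /andP[_ /eqP ->].
rewrite sumr_const.
have -> : #|[pred i in A | f i == f a]| = #|[set b in A | f b == f a]|.
  by apply: eq_card => i; rewrite !inE.
rewrite -[RHS]mulr_natr mulVf // pnatr_eq0 -lt0n; apply/card_gt0P; exists a.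
by rewrite inE Aa eqxx.
Qed.

Lemma sum_ind_card (T : finType) (A : {set T}) (P : pred T) :
  \sum_(i in A) (P i)%:R = #|[set i in A | P i]|%:R :> algC.
Proof.
rewrite -sum1_card natr_sum big_mkcond [RHS]big_mkcond /=.
by apply: eq_bigr => i _; rewrite inE; case: (i \in A); case: (P i).
Qed.

Lemma Gss_eq (gT : finGroupType) (G : {group gT}) :
  Gstarstar G = (fun C => C :|: set_inv C) @: classes G.
Proof.
rewrite /Gstarstar /classes -imset_comp; apply: eq_imset => g /=.
by rewrite set_inv_class.
Qed.

Lemma set_invK_class (gT : finGroupType) (G : {group gT}) C :
  C \in classes G -> set_inv (set_inv C) = C.
Proof. by case/imsetP=> y _ ->; rewrite !set_inv_class invgK. Qed.

Lemma set_inv_classes (gT : finGroupType) (G : {group gT}) C :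
  C \in classes G -> set_inv C \in classes G.
Proof. by case/imsetP=> y Gy ->; rewrite set_inv_class mem_classes ?groupV. Qed.

Lemma class_fiber (gT : finGroupType) (G : {group gT}) C :
  C \in classes G ->
  [set D in classes G | D :|: set_inv D == C :|: set_inv C] = [set C; set_inv C].
Proof.
move=> clC; apply/setP => D; rewrite !inE.
move: (clC) => clC0.
apply/andP/orP => [[clD /eqP eqD] | [/eqP-> | /eqP->]].
- case/imsetP: clD eqD => z Gz -> eqD.
  have : z \in C :|: set_inv C by rewrite -eqD inE class_refl.
  case/imsetP: clC => y Gy ->; rewrite set_inv_class inE.
  by case/orP => /class_eqP ->; [left|right].
- by rewrite clC0.
- by rewrite (set_inv_classes _ _ _ clC0) (set_invK_class _ _ _ clC0) setUC eqxx.
Qed.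

Lemma card_Gss (gT : finGroupType) (G : {group gT}) :
  #|Gstarstar G|%:R = (#|classes G|%:R
      + #|[set C in classes G | C == set_inv C]|%:R) / 2 :> algC.
Proof.
rewrite Gss_eq card_imset_sum -sum_ind_card -sum1_card natr_sum -big_split /=.
rewrite mulr_suml; apply: eq_bigr => C clC; rewrite class_fiber // cards2.
by case: eqP => _ /=; field; rewrite ?pnatr_eq0.
Qed.

Lemma fix_sum (gT : finGroupType) (G : {group gT}) (xi : 'CF(G))
    (Hxi : xi \is a linear_char) :
  #|[set i : Iirr G | 'chi_i == (('chi_i)^*)%CF * xi]|%:R
  = \sum_(C in classes G | C == set_inv C) xi (repr C).
Proof.
have dotE i : '['chi_i, ('chi_i)^*%CF * xi] = ('chi_i == ('chi_i)^*%CF * xi)%:R.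
  have: ('chi_i)^*%CF * xi \in irr G by rewrite mulrC mul_lin_irr ?cfConjC_irr.
  by case/irrP => j ->; rewrite cfdot_irr (inj_eq irr_inj).
rewrite -sum1_card natr_sum big_mkcond /=.
rewrite (eq_bigr (fun i => '['chi_i, ('chi_i)^*%CF * xi])); last first.
  by move=> i _; rewrite dotE inE; case: (_ == _).
rewrite (eq_bigr _ (fun i _ => cfdotE _ _)) -mulr_sumr exchange_big /=.
pose F x := (xi x)^* * (#|('C_G[x])%g|%:R *+ (x \in (x^-1 ^: G)%g)).
rewrite (eq_bigr F); last first.
  move=> x Gx; rewrite /F.
  rewrite -second_orthogonality_relation ?groupV // mulr_sumr.
  apply: eq_bigr => i _.
  rewrite !cfunE rmorphM /= conjCK char_inv ?irr_char // conjCK.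
  by rewrite mulrA mulrC.
rewrite (partition_big_imset (fun x => x ^: G)%g) /= -/(classes G).
rewrite big_mkcondr mulr_sumr; apply: eq_bigr => C /imsetP[y Gy ->].
rewrite (eq_bigr (fun _ => (xi y)^* * ((#|G|%:R / #|(y ^: G)%g|%:R)
     *+ ((y ^: G)%g == set_inv (y ^: G)%g)))); last first.
  move=> x /andP[Gx /eqP Exy]; rewrite /F.
  have -> : xi x = xi y by rewrite -(cfun_repr xi x) Exy cfun_repr.
  have -> : (x \in (x^-1 ^: G)%g) = ((y ^: G)%g == set_inv (y ^: G)%g).
    rewrite -Exy set_inv_class; apply/class_eqP/eqP => [->|->] //.
  rewrite -Exy -index_cent1 -(Lagrange (subsetIl G ('C[x])%g)) natrM mulfK //.
  by rewrite pnatr_eq0 -lt0n indexg_gt0.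
rewrite sumr_const.
have -> : #|[pred x in G | (x ^: G)%g == (y ^: G)%g]| = #|(y ^: G)%g|.
  apply: eq_card => x; rewrite !inE; apply/andP/idP => [[_ /eqP <-]|yx].
    exact: class_refl.
  split; last by apply/eqP/class_eqP.
  by case/imsetP: yx => z Gz ->; rewrite groupJ.
case: eqP => [Einv|_]; last first.
  by rewrite mulr0n mulr0 mul0rn mulr0.
have Gy' : (y^-1 \in y ^: G)%g.
  by rewrite Einv set_inv_class class_refl.
have -> : (xi y)^* = xi y.
  rewrite -(lin_charV_conj Hxi Gy) -(cfun_repr xi y^-1).
  by rewrite (class_eqP Gy') cfun_repr.
rewrite cfun_repr !mulr1n -mulr_natr.
set c := (#|(y ^: G)%g|%:R : algC).
have c0 : c != 0 by rewrite pnatr_eq0 -lt0n card_gt0; apply/set0Pn; exists y; exact: class_refl.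
have g0 : (#|G|%:R : algC) != 0 by rewrite pnatr_eq0 -lt0n cardG_gt0.
field; by apply/andP.
Qed.

Lemma xi_pm1 (gT : finGroupType) (G : {group gT}) (xi : 'CF(G))
    (Hxi : xi \is a linear_char) C :
  C \in classes G -> C == set_inv C ->
  xi (repr C) = 1 - 2 * (xi (repr C) == -1)%:R.
Proof.
case/imsetP => y Gy -> /eqP Einv; rewrite cfun_repr.
have Gy' : (y^-1 \in y ^: G)%g by rewrite Einv set_inv_class class_refl.
have E : xi y^-1%g = xi y.
  by rewrite -(cfun_repr xi y^-1) (class_eqP Gy') cfun_repr.
have : xi y ^+ 2 == 1.
  by rewrite expr2 -{2}E (lin_charV Hxi Gy) mulfV ?(lin_char_neq0 Hxi Gy).
rewrite sqrf_eq1 => /orP[/eqP->|/eqP->].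
  case: eqP => [h|_]; last by rewrite mulr0 subr0.
  by move: h; move/eqP; rewrite -subr_eq0 opprK -(natrD _ 1 1) pnatr_eq0.
by rewrite eqxx /= mulr1; ring.
Qed.

Theorem proposition3p8 (gT : finGroupType) (G : {group gT}) (xi : 'CF(G))
    (Hxi : xi \is a linear_char) :
  (#|[set i : Iirr G | 'chi_i == ((('chi_i)^*)%CF * xi)]|%:R
     + #|[set i : Iirr G | 'chi_i != ((('chi_i)^*)%CF * xi)]|%:R / 2%:R : algC)
   = #|Gstarstar G|%:R
     - #|[set C in classes G | (C == set_inv C) && (xi (repr C) == -1)]|%:R.
Proof.
set A := [set i : Iirr G | _].
have -> : [set i : Iirr G | 'chi_i != ((('chi_i)^*)%CF * xi)] = ~: A.
  by apply/setP => i; rewrite !inE.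
have cA : #|~: A|%:R = (Nirr G)%:R - #|A|%:R :> algC.
  have h : (#|A| + #|~: A|)%N = Nirr G by rewrite cardsC card_ord.
  have h' : (Nirr G)%:R = #|A|%:R + #|~: A|%:R :> algC by rewrite -natrD h.
  by rewrite h' addrC addKr.
have hN : (Nirr G)%:R = #|classes G|%:R :> algC by rewrite NirrE.
rewrite cA hN card_Gss {cA}/A fix_sum.
rewrite big_mkcondr /=.
rewrite (eq_bigr (fun C => (C == set_inv C)%:R
   - 2 * ((C == set_inv C) && (xi (repr C) == -1))%:R)); last first.
  move=> C clC; case: eqP => [E|_] /=; last by rewrite mulr0 subr0.
  by rewrite {1}(xi_pm1 _ _ _ Hxi _ clC (introT eqP E)) /=.
rewrite sumrB -mulr_sumr !sum_ind_card.
field. all: by [].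
Qed.
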